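(* Let $R$ be a finitely generated standard algebra. Assume that for every sufficiently large integer $d$, the set of all finitely generated homogeneous right ideals $I$ of $R$ with $m(I)\le d$ forms a rate filtration. Then $R$ is projective (right) coherent.
   Context: $R$ standard: graded, $R_0=k$, generated by $R_1$, $R_+=\bigoplus_{i>0}R_i$. $R$ is projective coherent if the kernel of every homogeneous homomorphism between finitely generated graded free right $R$-modules is finitely generated. For a homogeneous right ideal $J$, $m(J)$ is the maximal degree of a minimal homogeneous generator. A rate filtration is a set $\mathbf F$ of finitely generated homogeneous right ideals with $0,R_+\in\mathbf F$ such that for every $0\ne I\in\mathbf F$ there exist $J\in\mathbf F$, $J\ne I$, and a homogeneous $x\in I$ with $I=J+xR$, $m(J)\le m(I)$, and $\{a\in R: xa\in J\}\in\mathbf F$. *)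

(* Defs.v *)
From HB Require Import structures.
From mathcomp Require Import all_boot all_order all_algebra.
Set Implicit Arguments. Unset Strict Implicit. Unset Printing Implicit Defensive.
Import Order.TTheory GRing.Theory Num.Theory.
Local Open Scope ring_scope.

(* A (not necessarily commutative) k-algebra R is graded by a family of
   predicates G : nat -> R -> Prop, G i x meaning "x is homogeneous of degree i",
   i.e. x \in R_i. *)

Section Graded.
Variables (k : fieldType) (R : algType k) (G : nat -> R -> Prop).

Definition is_graded : Prop :=
  [/\ (forall i, G i 0),
      (forall i x y, G i x -> G i y -> G i (x + y)),
      (forall i (c : k) x, G i x -> G i (c *: x)) &
      (forall i j x y, G i x -> G j y -> G (i + j)%N (x * y))] /\
  (forall x, exists n (f : nat -> R),
          (forall i, G i (f i)) /\ x = \sum_(i < n) f i) /\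
  (forall n (f : nat -> R), (forall i, G i (f i)) ->
          \sum_(i < n) f i = 0 -> forall i, (i < n)%N -> f i = 0).

Definition is_standard : Prop :=
  [/\ is_graded,
      (forall x, G 0 x <-> exists c : k, x = c%:A) &
      (forall n x, G n.+1 x -> exists p (a b : 'I_p -> R),
          (forall l, G n (a l) /\ G 1 (b l)) /\ x = \sum_(l < p) a l * b l)].

(* finitely generated standard algebra: R_1 is finite dimensional *)
Definition is_fg_standard : Prop :=
  is_standard /\
  exists s : seq R, (forall y, y \in s -> G 1 y) /\
    (forall y, G 1 y -> exists c : 'I_(size s) -> k,
        y = \sum_(i < size s) c i *: s`_i).

Definition homogeneous (x : R) : Prop := exists n, G n x.

Definition rspan (s : seq R) (x : R) : Prop :=
  exists r : 'I_(size s) -> R, x = \sum_(i < size s) s`_i * r i.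

Definition is_rideal (I : R -> Prop) : Prop :=
  [/\ I 0, (forall x y, I x -> I y -> I (x + y)) &
      (forall x r, I x -> I (x * r))].

Definition is_homogeneous_ideal (I : R -> Prop) : Prop :=
  forall x, I x -> exists n (f : nat -> R),
    (forall i, G i (f i) /\ I (f i)) /\ x = \sum_(i < n) f i.

Definition is_fg (I : R -> Prop) : Prop :=
  exists s : seq R, forall x, I x <-> rspan s x.

Definition fg_hom_rideal (I : R -> Prop) : Prop :=
  [/\ is_rideal I, is_homogeneous_ideal I & is_fg I].

Definition eqI (I J : R -> Prop) : Prop := forall x, I x <-> J x.

Definition zeroI : R -> Prop := fun x => x = 0.

Definition Rplus : R -> Prop := fun x =>
  exists n (f : nat -> R), (forall i, G i.+1 (f i)) /\ x = \sum_(i < n) f i.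

Definition minimal_hgens (I : R -> Prop) (s : seq (nat * R)) : Prop :=
  [/\ (forall p, p \in s -> G p.1 p.2),
      (forall x, I x <-> rspan (map snd s) x) &
      (forall i, (i < size s)%N ->
         ~ rspan (map snd (take i s ++ drop i.+1 s)) (nth (0%N, 0) s i).2)].

(* m(I) = n : maximal degree of a minimal homogeneous generator (0 if I = 0) *)
Definition mval (I : R -> Prop) (n : nat) : Prop :=
  exists s, minimal_hgens I s /\ n = \max_(p <- s) p.1.

Definition m_le (I : R -> Prop) (d : nat) : Prop :=
  forall n, mval I n -> (n <= d)%N.

Definition m_leI (J I : R -> Prop) : Prop :=
  forall n n', mval J n -> mval I n' -> (n <= n')%N.

Definition is_rate_filtration (F : (R -> Prop) -> Prop) : Prop :=
  [/\ (forall I, F I -> fg_hom_rideal I),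
      F zeroI, F Rplus &
      (forall I, F I -> ~ eqI I zeroI ->
         exists J x, [/\ F J, ~ eqI J I, homogeneous x & I x] /\
           [/\ eqI I (fun y => exists a b, J a /\ y = a + x * b),
              m_leI J I & F (fun a => J (x * a))])].

Definition Fdeg (d : nat) : (R -> Prop) -> Prop :=
  fun I => fg_hom_rideal I /\ m_le I d.

(* A homogeneous homomorphism between f.g. graded free right modules
   (+)_j R(-b_j) -> (+)_i R(-c_i), given by a matrix acting on columns. *)
Definition homogeneous_mx m n (A : 'M[R]_(m, n)) (b : 'I_n -> nat)
    (c : 'I_m -> nat) : Prop :=
  forall i j, A i j = 0 \/ (c i <= b j)%N /\ G (b j - c i)%N (A i j).

Definition ker_fg m n (A : 'M[R]_(m, n)) : Prop :=
  exists p (w : 'I_p -> 'cV[R]_n), (forall l, A *m w l = 0) /\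
    forall v : 'cV[R]_n, A *m v = 0 ->
      exists r : 'I_p -> R, v = \sum_(l < p) w l *m (r l)%:M.

Definition projective_coherent : Prop :=
  forall m n (A : 'M[R]_(m, n)) b c, homogeneous_mx A b c -> ker_fg A.

End Graded.

(* Main.v *)
From HB Require Import structures.
Require Import Defs.
From mathcomp Require Import all_boot all_order all_algebra.
From mathcomp Require Import zify.
From Stdlib Require Import IndefiniteDescription Classical.
Set Implicit Arguments. Unset Strict Implicit. Unset Printing Implicit Defensive.
Import Order.TTheory GRing.Theory Num.Theory.
Local Open Scope ring_scope.


Lemma cid2 {A : Type} (P : A -> Prop) : (exists x, P x) -> {x | P x}.
Proof. exact: constructive_indefinite_description. Qed.

Lemma choiceF {A B : Type} (P : A -> B -> Prop) :
  (forall a, exists b, P a b) -> exists f : A -> B, forall a, P a (f a).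
Proof.
move=> H; exists (fun a => proj1_sig (cid2 (H a))) => a.
exact: (proj2_sig (cid2 (H a))).
Qed.

Lemma sum_pad (V : zmodType) (n M : nat) (f : nat -> V) : (n <= M)%N ->
  \sum_(i < n) f i = \sum_(i < M) (if (i < n)%N then f i else 0).
Proof.
move=> nM. rewrite -(big_mkord xpredT f).
rewrite -(big_mkord xpredT (fun i => if (i < n)%N then f i else 0)).
rewrite [RHS](@big_cat_nat _ _ _ n) //=.
rewrite [X in _ = _ + X]big_nat_cond [X in _ = _ + X]big1; last first.
  by move=> i /andP[/andP[ni _] _]; rewrite ltnNge ni.
by rewrite addr0 [LHS]big_nat_cond [RHS]big_nat_cond; apply: eq_bigr => i /andP[/andP[_ ->]].
Qed.

Section Comp.
Variables (k : fieldType) (R : algType k) (G : nat -> R -> Prop).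
Hypothesis Hgr : is_graded G.

Lemma G0 i : G i 0. Proof. by move: Hgr; rewrite /is_graded => -[[]]. Qed.
Lemma GD i x y : G i x -> G i y -> G i (x + y). Proof. by move: Hgr; rewrite /is_graded => -[[_ h _ _] _]; apply: h. Qed.
Lemma GZ i (c : k) x : G i x -> G i (c *: x). Proof. by move: Hgr; rewrite /is_graded => -[[_ _ h _] _]; apply: h. Qed.
Lemma GM i j x y : G i x -> G j y -> G (i + j)%N (x * y). Proof. by move: Hgr; rewrite /is_graded => -[[_ _ _ h] _]; apply: h. Qed.
Lemma GN i x : G i x -> G i (- x). Proof. by move=> h; rewrite -scaleN1r; apply: GZ. Qed.
Lemma GB i x y : G i x -> G i y -> G i (x - y). Proof. by move=> h1 h2; apply: GD => //; apply: GN. Qed.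
Lemma Gsum i (I : Type) (r : seq I) (P : pred I) (F : I -> R) :
  (forall j, P j -> G i (F j)) -> G i (\sum_(j <- r | P j) F j).
Proof. by move=> h; apply: (big_ind (G i)) => //; [exact: G0 | exact: GD]. Qed.

Lemma Gex x : exists n (f : nat -> R), (forall i, G i (f i)) /\ x = \sum_(i < n) f i.
Proof. by move: Hgr; rewrite /is_graded => -[_ []]. Qed.

Lemma Guniq0 n (f : nat -> R) : (forall i, G i (f i)) ->
  \sum_(i < n) f i = 0 -> forall i, (i < n)%N -> f i = 0.
Proof. by move: Hgr; rewrite /is_graded => -[_ [] _]; apply. Qed.

Definition Nx (x : R) : nat := proj1_sig (cid2 (Gex x)).
Definition fx (x : R) : nat -> R := proj1_sig (cid2 (proj2_sig (cid2 (Gex x)))).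
Lemma fxP x : (forall i, G i (fx x i)) /\ x = \sum_(i < Nx x) fx x i.
Proof. exact: (proj2_sig (cid2 (proj2_sig (cid2 (Gex x))))). Qed.

Definition hcomp (e : nat) (x : R) : R := if (e < Nx x)%N then fx x e else 0.

Lemma compG e x : G e (hcomp e x).
Proof. by rewrite /hcomp; case: ifP => _; [case: (fxP x) | exact: G0]. Qed.

Lemma comp_ge x e : (Nx x <= e)%N -> hcomp e x = 0.
Proof. by rewrite /hcomp ltnNge => ->. Qed.

Lemma comp_full x M : (Nx x <= M)%N -> x = \sum_(e < M) hcomp e x.
Proof. by move=> h; rewrite /hcomp; case: (fxP x) => _ E; rewrite {1}E (sum_pad _ h). Qed.

Lemma comp_uniq x n (f : nat -> R) : (forall i, G i (f i)) -> x = \sum_(i < n) f i ->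
  forall e, hcomp e x = if (e < n)%N then f e else 0.
Proof.
move=> Gf xE e; set M := maxn n (Nx x).
have h1 : x = \sum_(i < M) (if (i < n)%N then f i else 0).
  by rewrite {1}xE (sum_pad f (leq_maxl n (Nx x))).
have h2 : x = \sum_(i < M) hcomp i x by apply: comp_full; exact: leq_maxr.
have hG i : G i ((if (i < n)%N then f i else 0) - hcomp i x).
  by apply: GB; [case: ifP => _; [exact: Gf | exact: G0] | exact: compG].
case: (ltnP e M) => eM.
  apply/eqP; rewrite eq_sym -subr_eq0; apply/eqP.
  apply: (@Guniq0 M _ hG) => //; by rewrite sumrB -h1 -h2 subrr.
rewrite comp_ge; last by apply: leq_trans eM; exact: leq_maxr.
by rewrite ltnNge (leq_trans (leq_maxl _ _) eM).
Qed.

Lemma comp_hom n x e : G n x -> hcomp e x = if e == n then x else 0.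
Proof.
move=> Gx; rewrite (@comp_uniq x n.+1 (fun i => if i == n then x else 0)).
- by case: ltnP => // h; case: eqP => // en; move: h; rewrite en ltnn.
- by move=> i; case: eqP => [->|_] //; exact: G0.
by rewrite big_ord_recr /= eqxx big1 ?add0r // => i _; rewrite ltn_eqF.
Qed.

Lemma comp0 e : hcomp e 0 = 0.
Proof. by rewrite (comp_hom _ (G0 0)); case: eqP. Qed.

Lemma compD e x y : hcomp e (x + y) = hcomp e x + hcomp e y.
Proof.
set N := maxn (Nx x) (Nx y).
have hx := comp_full (leq_maxl (Nx x) (Nx y)).
have hy := comp_full (leq_maxr (Nx x) (Nx y)).
rewrite (@comp_uniq (x + y) N (fun i => hcomp i x + hcomp i y)).
- case: ltnP => // h; rewrite !comp_ge ?addr0 //.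
    by apply: leq_trans h; exact: leq_maxr.
  by apply: leq_trans h; exact: leq_maxl.
- by move=> i; apply: GD; exact: compG.
by rewrite big_split /= -hx -hy.
Qed.

Lemma comp_sum e (I : Type) (r : seq I) (P : pred I) (F : I -> R) :
  hcomp e (\sum_(j <- r | P j) F j) = \sum_(j <- r | P j) hcomp e (F j).
Proof. exact: (big_morph (hcomp e) (compD e) (comp0 e)). Qed.

Lemma compM b a z e : G b a -> hcomp e (a * z) = if (b <= e)%N then a * hcomp (e - b) z else 0.
Proof.
move=> Ga; set N := Nx z.
pose h j := if (b <= j)%N then a * hcomp (j - b) z else 0.
rewrite (@comp_uniq (a * z) (b + N) h).
- rewrite /h; case: ltnP => // eN; case: ifP => // be.
  by rewrite comp_ge ?mulr0 // leq_subRL.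
- move=> j; rewrite /h; case: ifP => bj; last exact: G0.
  by rewrite -{1}(subnKC bj); apply: (@GM b (j - b)%N) => //; exact: compG.
rewrite {1}(comp_full (leqnn N)) mulr_sumr.
rewrite -(big_mkord xpredT h) -(big_mkord xpredT (fun i => a * hcomp i z)).
rewrite [RHS](@big_cat_nat _ _ _ b) //= ?leq_addr //.
rewrite [X in _ = X + _]big_nat_cond [X in _ = X + _]big1; last first.
  by move=> i /andP[/andP[_ ib] _]; rewrite /h leqNgt ib.
rewrite add0r (big_addn 0 (b + N) b) addKn.
by apply: eq_bigr => i _; rewrite /h leq_addl addnK.
Qed.

End Comp.


Section Ker.
Variables (k : fieldType) (R : algType k).

Definition rspanM n (s : 'rV[R]_n) (y : R) := exists z : 'cV[R]_n, y = (s *m z) 0 0.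
Definition rowv (s : seq R) : 'rV[R]_(size s) := \row_(j < size s) s`_j.
Definition inspan p n (W : 'I_p -> 'cV[R]_n) (v : 'cV[R]_n) :=
  exists r : 'I_p -> R, v = \sum_(l < p) W l *m (r l)%:M.

Lemma mxsE m n (A : 'M[R]_(m, n)) (a : R) i j : (A *m a%:M) i j = A i j * a.
Proof.
rewrite mxE (bigD1 j) //= mxE eqxx mulr1n big1 ?addr0 // => l /negbTE ne.
by rewrite mxE ne mulr0n mulr0.
Qed.

Lemma mx00E n (s : 'rV[R]_n) (z : 'cV[R]_n) : (s *m z) 0 0 = \sum_j s 0 j * z j 0.
Proof. by rewrite mxE. Qed.

Lemma col_decomp n (v : 'cV[R]_n) : v = \sum_(j < n) delta_mx j 0 *m (v j 0)%:M.
Proof.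
apply/matrixP => i j; rewrite (ord1 j) summxE (bigD1 i) //= mxsE mxE !eqxx mul1r.
rewrite big1 ?addr0 // => l /negbTE ne; rewrite mxsE mxE eq_sym ne mul0r //.
Qed.

Lemma entry_col n (s : 'rV[R]_n) j : s 0 j = (s *m delta_mx j (0 : 'I_1)) 0 0.
Proof. by rewrite -(colE j s) mxE. Qed.

Lemma rspan_rowv (s : seq R) y : rspan s y <-> rspanM (rowv s) y.
Proof.
split=> [[r ->]|[z ->]].
  by exists (\col_i r i); rewrite mx00E; apply: eq_bigr => i _; rewrite !mxE.
by exists (fun i => z i 0); rewrite mx00E; apply: eq_bigr => i _; rewrite !mxE.
Qed.

Section RS.
Variables (n : nat) (s : 'rV[R]_n).
Lemma rspanM0 : rspanM s 0.
Proof. exists 0. by rewrite mulmx0 mxE. Qed.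
Lemma rspanMD x y : rspanM s x -> rspanM s y -> rspanM s (x + y).
Proof. by move=> [z1 ->] [z2 ->]; exists (z1 + z2); rewrite mulmxDr [RHS]mxE. Qed.
Lemma rspanMr x r : rspanM s x -> rspanM s (x * r).
Proof. by move=> [z ->]; exists (z *m r%:M); rewrite mulmxA mxsE. Qed.
Lemma rspanMN x : rspanM s x -> rspanM s (- x).
Proof. by move=> h; rewrite -mulrN1; apply: rspanMr. Qed.
Lemma rspanM_entry j : rspanM s (s 0 j).
Proof. by exists (delta_mx j 0); rewrite entry_col. Qed.
Lemma rspanM_sum (I : Type) (r : seq I) (P : pred I) (F : I -> R) :
  (forall i, P i -> rspanM s (F i)) -> rspanM s (\sum_(i <- r | P i) F i).
Proof. by move=> h; apply: (big_ind (rspanM s)) => //; [exact: rspanM0|exact: rspanMD]. Qed.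
End RS.

Lemma rspanM_sub n1 n2 (s : 'rV[R]_n1) (t : 'rV[R]_n2) y :
  (forall j, rspanM t (s 0 j)) -> rspanM s y -> rspanM t y.
Proof.
move=> h [z ->]; rewrite mx00E; apply: rspanM_sum => j _.
by apply: rspanMr; apply: h.
Qed.

Section IS.
Variables (p n : nat) (W : 'I_p -> 'cV[R]_n).
Lemma inspan0 : inspan W 0.
Proof. by exists (fun _ => 0); rewrite big1 // => l _; rewrite raddf0 mulmx0. Qed.
Lemma inspanD u v : inspan W u -> inspan W v -> inspan W (u + v).
Proof.
move=> [r1 ->] [r2 ->]; exists (fun l => r1 l + r2 l).
by rewrite -big_split /=; apply: eq_bigr => l _; rewrite raddfD mulmxDr.
Qed.
Lemma inspanMs u a : inspan W u -> inspan W (u *m a%:M).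
Proof.
move=> [r ->]; exists (fun l => r l * a); rewrite mulmx_suml.
by apply: eq_bigr => l _; rewrite scalar_mxM mulmxA.
Qed.
Lemma inspan_gen l : inspan W (W l).
Proof.
exists (fun i => if i == l then 1 else 0); rewrite (bigD1 l) //= eqxx mulmx1.
by rewrite big1 ?addr0 // => i /negbTE ->; rewrite raddf0 mulmx0.
Qed.
Lemma inspanN u : inspan W u -> inspan W (- u).
Proof. by move=> h; have := inspanMs (-1) h; rewrite raddfN mulmxN mulmx1. Qed.
Lemma inspan_sum (I : Type) (r : seq I) (P : pred I) (F : I -> 'cV[R]_n) :
  (forall i, P i -> inspan W (F i)) -> inspan W (\sum_(i <- r | P i) F i).
Proof. by move=> h; apply: (big_ind (inspan W)) => //; [exact: inspan0|exact: inspanD]. Qed.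
End IS.

Lemma inspan_trans p1 p2 n (W1 : 'I_p1 -> 'cV[R]_n) (W2 : 'I_p2 -> 'cV[R]_n) v :
  (forall l, inspan W2 (W1 l)) -> inspan W1 v -> inspan W2 v.
Proof.
move=> h [r ->]; apply: inspan_sum => l _; apply: inspanMs; exact: h.
Qed.

Lemma inspan_mull p n m (W : 'I_p -> 'cV[R]_n) (B : 'M[R]_(m, n)) v :
  inspan W v -> inspan (fun l => B *m W l) (B *m v).
Proof.
move=> [r ->]; exists r; rewrite mulmx_sumr; apply: eq_bigr => l _; exact: mulmxA.
Qed.

Lemma kerfgI m n (A : 'M[R]_(m, n)) p (W : 'I_p -> 'cV[R]_n) :
  (forall l, A *m W l = 0) -> (forall v, A *m v = 0 -> inspan W v) -> ker_fg A.
Proof. by move=> h1 h2; exists p, W; split. Qed.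

Lemma kerfg_fin m n (A : 'M[R]_(m, n)) (T : finType) (W : T -> 'cV[R]_n) :
  (forall t, A *m W t = 0) ->
  (forall v, A *m v = 0 -> exists r : T -> R, v = \sum_t W t *m (r t)%:M) -> ker_fg A.
Proof.
move=> h1 h2; apply: (@kerfgI _ _ A #|T| (fun i => W (enum_val i))) => [l|v /h2 [r ->]].
  exact: h1.
exists (fun i => r (enum_val i)).
rewrite (reindex (@enum_val T (pred_of_simpl (pred_of_argType T)))) //=; exists enum_rank => x _; [exact: enum_valK | exact: enum_rankK].
Qed.

Lemma kerfg_cat m n (A : 'M[R]_(m, n)) p1 p2 (W1 : 'I_p1 -> 'cV[R]_n) (W2 : 'I_p2 -> 'cV[R]_n) :
  (forall l, A *m W1 l = 0) -> (forall l, A *m W2 l = 0) ->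
  (forall v, A *m v = 0 -> exists v1 v2, [/\ v = v1 + v2, inspan W1 v1 & inspan W2 v2]) ->
  ker_fg A.
Proof.
move=> h1 h2 h3.
pose W (i : 'I_(p1 + p2)) := match split i with inl a => W1 a | inr b => W2 b end.
apply: (@kerfgI _ _ A _ W) => [l|v /h3 [v1 [v2 [-> i1 i2]]]].
  by rewrite /W; case: (split l).
apply: inspanD.
  apply: inspan_trans i1 => l; have := inspan_gen W (lshift p2 l).
  by rewrite /W (unsplitK (inl _)).
apply: inspan_trans i2 => l; have := inspan_gen W (rshift p1 l).
by rewrite /W (unsplitK (inr _)).
Qed.

Lemma kerfg_all m n (A : 'M[R]_(m, n)) : (forall v : 'cV[R]_n, A *m v = 0) -> ker_fg A.
Proof.
move=> h; apply: (@kerfgI _ _ A n (fun j => delta_mx j (0 : 'I_1))) => [l|v _]; first exact: h.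
by exists (fun j => v j 0); exact: col_decomp.
Qed.

Lemma rv0 n (s : 'rV[R]_n) : (s *m 0 = 0 :> 'M_1) .
Proof. exact: mulmx0. Qed.

Lemma kerfg_change n1 n2 (s : 'rV[R]_n1) (t : 'rV[R]_n2) :
  (forall j, rspanM s (t 0 j)) -> (forall i, rspanM t (s 0 i)) ->
  ker_fg s -> ker_fg t.
Proof.
move=> ht hs [p [w [w0 wsp]]].
have [za hza] := choiceF ht; have [zb hzb] := choiceF hs.
pose al : 'M[R]_(n1, n2) := \matrix_(i, j) za j i 0.
pose be : 'M[R]_(n2, n1) := \matrix_(i, j) zb j i 0.
have tE : t = s *m al.
  apply/matrixP => i j; rewrite (ord1 i) hza !mxE; apply: eq_bigr => l _; by rewrite !mxE.
have sE : s = t *m be.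
  apply/matrixP => i j; rewrite (ord1 i) hzb !mxE; apply: eq_bigr => l _; by rewrite !mxE.
pose W1 l := be *m w l.
pose W2 (j : 'I_n2) := (1%:M - be *m al) *m delta_mx j (0 : 'I_1).
apply: (kerfg_cat (W1 := W1) (W2 := W2)).
- by move=> l; rewrite /W1 mulmxA -sE.
- by move=> j; rewrite /W2 mulmxA mulmxBr mulmx1 mulmxA -sE -tE subrr mul0mx.
move=> v tv.
have sv : s *m (al *m v) = 0 by rewrite mulmxA -tE.
exists (be *m (al *m v)), ((1%:M - be *m al) *m v); split.
- by rewrite mulmxBl mul1mx mulmxA addrC subrK.
- exact: inspan_mull (wsp _ sv).
rewrite (col_decomp v) mulmx_sumr; apply: inspan_sum => j _.
by rewrite mulmxA; apply: inspanMs; exact: inspan_gen.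
Qed.

End Ker.


Section Ext.
Variables (k : fieldType) (R : algType k).

Lemma sum_col_mx m1 m2 n p (A : 'I_p -> 'M[R]_(m1, n)) (B : 'I_p -> 'M[R]_(m2, n)) :
  \sum_(q < p) col_mx (A q) (B q) = col_mx (\sum_(q < p) A q) (\sum_(q < p) B q).
Proof.
apply: (big_rec3 (fun x y z => x = col_mx y z)); first by rewrite col_mx0.
by move=> i y1 y2 y3 _ ->; rewrite add_col_mx.
Qed.

Lemma mx11_eq0 (M : 'M[R]_1) : M 0 0 = 0 -> M = 0.
Proof. by move=> h; rewrite (mx11_scalar M) h raddf0. Qed.

Lemma kerfg_ext n q (t : 'rV[R]_n) (x : R) (c : 'rV[R]_q) :
  ker_fg t ->
  (forall a, rspanM c a -> rspanM t (x * a)) ->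
  (forall a, rspanM t (x * a) -> rspanM c a) ->
  ker_fg (row_mx t (x%:M : 'M[R]_1)).
Proof.
move=> [p [w [w0 wsp]]] H2 H3.
have [ga hga] := choiceF (fun j : 'I_q => H2 _ (rspanM_entry c j)).
pose B : 'M[R]_(n + 1, n) := col_mx 1%:M 0.
pose W1 l := B *m w l.
pose W2 j := col_mx (- ga j) ((c 0 j)%:M : 'M[R]_1).
apply: (kerfg_cat (W1 := W1) (W2 := W2)).
- by move=> l; rewrite /W1 /B mul_col_mx mul1mx mul0mx mul_row_col w0 mulmx0 addr0.
- move=> j; rewrite /W2 mul_row_col; apply: mx11_eq0.
  by rewrite -scalar_mxM mulmxN mxE [X in X + _]mxE [X in _ + X]mxE eqxx mulr1n hga addNr.
move=> v Tv.
set v1 := usubmx v; set v2 := dsubmx v.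
have vE : v = col_mx v1 v2 by rewrite vsubmxK.
have e1 : (t *m v1) 0 0 + x * v2 0 0 = 0.
  move: Tv; rewrite vE mul_row_col => /matrixP /(_ 0 0).
  by rewrite mxE mul_scalar_mx !mxE.
have : rspanM c (v2 0 0).
  apply: H3; have -> : x * v2 0 0 = - (t *m v1) 0 0 by apply/eqP; rewrite -addr_eq0 addrC e1.
  by apply: rspanMN; exists v1.
move=> [rho erho].
pose P := \sum_(j < q) - ga j *m (rho j 0)%:M.
pose Q := \sum_(j < q) ((c 0 j)%:M : 'M[R]_1) *m (rho j 0)%:M.
have QE : Q = v2.
  rewrite (mx11_scalar v2) erho mx00E /Q; apply/matrixP => i i'; rewrite (ord1 i) (ord1 i').
  rewrite summxE mxE eqxx mulr1n; apply: eq_bigr => j _; by rewrite mxsE mxE eqxx mulr1n.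
have uk : t *m (v1 - P) = 0.
  apply: mx11_eq0; rewrite mulmxBr mxE [X in _ + X]mxE /P mulmx_sumr summxE.
  have -> : \sum_(j < q) (t *m (- ga j *m (rho j 0)%:M)) 0 0 = - (x * v2 0 0).
    rewrite erho mx00E mulr_sumr -sumrN; apply: eq_bigr => j _.
    by rewrite mulmxA mxsE mulmxN mxE -hga mulNr mulrA.
  by rewrite opprK e1.
exists (col_mx (v1 - P) 0), (col_mx P Q); split.
- by rewrite add_col_mx subrK add0r QE vE.
- have [r ->] := wsp _ uk.
  have -> : col_mx (\sum_(l < p) w l *m (r l)%:M) 0 = B *m \sum_(l < p) w l *m (r l)%:M.
    by rewrite /B mul_col_mx mul1mx mul0mx.
  by apply: inspan_mull; exists r.
exists (fun j => rho j 0); rewrite /P /Q -sum_col_mx; apply: eq_bigr => j _.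
by rewrite /W2 mul_col_mx.
Qed.

Lemma rspan_mem (s : seq R) y : y \in s -> rspan s y.
Proof.
move=> ys; apply/rspan_rowv.
have hy : (index y s < size s)%N by rewrite index_mem.
have := rspanM_entry (rowv s) (Ordinal hy).
by rewrite mxE /= nth_index.
Qed.

Lemma rspan_sub (s t : seq R) y : (forall z, z \in s -> rspan t z) -> rspan s y -> rspan t y.
Proof.
move=> h /rspan_rowv ys; apply/rspan_rowv; apply: rspanM_sub ys => j.
by rewrite mxE; apply/rspan_rowv; apply: h; apply: mem_nth.
Qed.

Lemma rspan0 (s : seq R) : rspan s 0.
Proof. by apply/rspan_rowv; apply: rspanM0. Qed.
Lemma rspanD (s : seq R) x y : rspan s x -> rspan s y -> rspan s (x + y).
Proof. by move=> /rspan_rowv h1 /rspan_rowv h2; apply/rspan_rowv; apply: rspanMD. Qed.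
Lemma rspanr (s : seq R) x r : rspan s x -> rspan s (x * r).
Proof. by move=> /rspan_rowv h1; apply/rspan_rowv; apply: rspanMr. Qed.
Lemma rspanN (s : seq R) x : rspan s x -> rspan s (- x).
Proof. by move=> /rspan_rowv h1; apply/rspan_rowv; apply: rspanMN. Qed.
Lemma rspan_sum (s : seq R) (I : Type) (r : seq I) (P : pred I) (F : I -> R) :
  (forall i, P i -> rspan s (F i)) -> rspan s (\sum_(i <- r | P i) F i).
Proof. by move=> h; apply: (big_ind (rspan s)) => //; [exact: rspan0|exact: rspanD]. Qed.

Lemma mem_rem_nth (T : eqType) (s : seq T) (x0 : T) i z :
  (i < size s)%N -> z \in s -> z = nth x0 s i \/ z \in take i s ++ drop i.+1 s.
Proof.
move=> hi; rewrite -{1}(cat_take_drop i s) (drop_nth x0 hi) mem_cat inE.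
case/orP => [h|/orP [/eqP ->|h]]; [right; by rewrite mem_cat h | by left | right; by rewrite mem_cat h orbT].
Qed.

Lemma mem_rem_sub (T : eqType) (s : seq T) i z : z \in take i s ++ drop i.+1 s -> z \in s.
Proof. by rewrite mem_cat => /orP [/mem_take|/mem_drop]. Qed.

Lemma exists_minimal (G : nat -> R -> Prop) (I : R -> Prop) (s : seq (nat * R)) :
  (forall p, p \in s -> G p.1 p.2) -> (forall y, I y <-> rspan (map snd s) y) ->
  exists s', minimal_hgens G I s' /\ {subset s' <= s}.
Proof.
move: {2}(size s) (leqnn (size s)) => N; elim: N s => [|N IH] s.
  rewrite leqn0 => /eqP /size0nil -> _ hI; exists [::]; split; last by [].
  rewrite /minimal_hgens; split. by []. exact: hI. by move=> i; rewrite ltn0.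
move=> sN hG hI.
case: (classic (exists i, (i < size s)%N /\
   rspan (map snd (take i s ++ drop i.+1 s)) (nth (0%N, 0) s i).2)); last first.
  move=> nex; exists s; split => //; split => // i hi hr; apply: nex; by exists i.
move=> [i [hi hr]].
have sz : (size (take i s ++ drop i.+1 s) <= N)%N.
  rewrite size_cat size_take size_drop hi; lia.
have hgen : forall y, I y <-> rspan (map snd (take i s ++ drop i.+1 s)) y.
  move=> y; rewrite hI; split; apply: rspan_sub => z.
    move=> /mapP [pz pzs ->]; case: (mem_rem_nth (0%N, 0) hi pzs) => [->|h] //.
    by apply: rspan_mem; apply: map_f.
  by move=> /mapP [pz /mem_rem_sub pzs ->]; apply: rspan_mem; apply: map_f.
have [s' [ms sub]] := IH _ sz (fun p hp => hG p (mem_rem_sub hp)) hgen.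
by exists s'; split => // p /sub /mem_rem_sub.
Qed.

End Ext.


Section Gens.
Variables (k : fieldType) (R : algType k) (G : nat -> R -> Prop).

Lemma rspan_ideal (J : R -> Prop) (t : seq R) y :
  is_rideal J -> (forall z, z \in t -> J z) -> rspan t y -> J y.
Proof.
move=> [J0 JD Jr] ht [r ->].
apply: (big_ind J) => // i _; apply: Jr; apply: ht; exact: mem_nth.
Qed.

Lemma hgens_exist (I : R -> Prop) : fg_hom_rideal G I ->
  exists s : seq (nat * R), (forall p, p \in s -> G p.1 p.2) /\
    (forall y, I y <-> rspan (map snd s) y).
Proof.
move=> [[I0 ID Ir] Ihom [t ht]].
have hex : forall y : R, exists nf : nat * (nat -> R), I y ->
   (forall i, G i (nf.2 i) /\ I (nf.2 i)) /\ y = \sum_(i < nf.1) nf.2 i.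
  move=> y; case: (classic (I y)) => [/Ihom [n [f hf]]|ny].
    by exists (n, f).
  by exists (0%N, fun _ => 0).
have [F hF] := choiceF hex.
pose s := flatten [seq [seq (i, (F z).2 i) | i <- iota 0 (F z).1] | z <- t].
have memS p : p \in s -> exists2 z, z \in t & exists2 i, (i < (F z).1)%N & p = (i, (F z).2 i).
  move=> /flatten_mapP [z zt /mapP [i]]; rewrite mem_iota add0n => /andP [_ hi] ->.
  by exists z => //; exists i.
have It z : z \in t -> I z by move=> zt; apply/ht; apply: rspan_mem.
have hs p : p \in s -> G p.1 p.2 /\ I p.2.
  by move=> /memS [z /It Iz [i _ ->]] /=; have [h _] := hF z Iz; exact: h.
exists s; split; first by move=> p /hs [].
move=> y; split.
  move=> /ht; apply: rspan_sub => z zt; have [_ ->] := hF z (It z zt).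
  apply: rspan_sum => i _; apply: rspan_mem.
  apply/mapP; exists (val i, (F z).2 i) => //; apply/flatten_mapP; exists z => //.
  by apply: map_f; rewrite mem_iota add0n ltn_ord.
move=> h; apply/ht; apply: rspan_sub h => z /mapP [p /hs [_ Ip] ->].
by apply/ht.
Qed.

Lemma gens_le (d : nat) (I : R -> Prop) : Fdeg G d I ->
  exists s : seq (nat * R), (forall p, p \in s -> G p.1 p.2 /\ (p.1 <= d)%N) /\
    (forall y, I y <-> rspan (map snd s) y).
Proof.
move=> [hI mI]; have [s0 [hs0 gs0]] := hgens_exist hI.
have [s [ms _]] := exists_minimal hs0 gs0.
have mv : mval G I (\max_(p <- s) p.1)%N by exists s.
have := mI _ mv => hle.
case: ms => ms1 ms2 _; exists s; split => // p ps; split; first exact: ms1.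
apply: leq_trans hle; exact: (leq_bigmax_seq p ps).
Qed.

Definition kspan (L : seq R) (y : R) := exists c : 'I_(size L) -> k, y = \sum_i c i *: L`_i.

Section KS.
Variable L : seq R.
Lemma kspan0 : kspan L 0.
Proof. by exists (fun _ => 0); rewrite big1 // => i _; rewrite scale0r. Qed.
Lemma kspanD x y : kspan L x -> kspan L y -> kspan L (x + y).
Proof.
move=> [c1 ->] [c2 ->]; exists (fun i => c1 i + c2 i).
by rewrite -big_split; apply: eq_bigr => i _; rewrite scalerDl.
Qed.
Lemma kspanZ a x : kspan L x -> kspan L (a *: x).
Proof.
move=> [c ->]; exists (fun i => a * c i); rewrite scaler_sumr.
by apply: eq_bigr => i _; rewrite scalerA.
Qed.
Lemma kspan_mem x : x \in L -> kspan L x.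
Proof.
move=> xL; have hx : (index x L < size L)%N by rewrite index_mem.
exists (fun i => if i == Ordinal hx then 1 else 0).
rewrite (bigD1 (Ordinal hx)) //= eqxx scale1r nth_index // big1 ?addr0 // => i /negbTE ->.
by rewrite scale0r.
Qed.
Lemma kspan_sum (I : Type) (r : seq I) (P : pred I) (F : I -> R) :
  (forall i, P i -> kspan L (F i)) -> kspan L (\sum_(i <- r | P i) F i).
Proof. by move=> h; apply: (big_ind (kspan L)) => //; [exact: kspan0|exact: kspanD]. Qed.
End KS.

Lemma kspan_sub (A B : seq R) y : (forall z, z \in A -> kspan B z) -> kspan A y -> kspan B y.
Proof.
move=> h [c ->]; apply: kspan_sum => i _; apply: kspanZ; apply: h; exact: mem_nth.
Qed.

Lemma kspan_mul (A B : seq R) y z : kspan A y -> kspan B z ->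
  kspan [seq a * b | a <- A, b <- B] (y * z).
Proof.
move=> [c ->] [c' ->]; rewrite mulr_suml; apply: kspan_sum => i _.
rewrite mulr_sumr; apply: kspan_sum => j _.
rewrite -scalerAl -scalerAr; apply: kspanZ; apply: kspanZ; apply: kspan_mem.
by apply: allpairs_f; apply: mem_nth.
Qed.

Definition indep (r : nat) (y : nat -> R) :=
  forall c : nat -> k, \sum_(i < r) c i *: y i = 0 -> forall i, (i < r)%N -> c i = 0.

Lemma rank_bound (L : seq R) r y : indep r y -> (forall i, (i < r)%N -> kspan L (y i)) ->
  (r <= size L)%N.
Proof.
move=> hind hsp.
have hex : forall i : nat, exists u : 'I_(size L) -> k,
   (i < r)%N -> y i = \sum_j u j *: L`_j.
  move=> i; case: (ltnP i r) => hi; first by have [c hc] := hsp i hi; exists c.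
  by exists (fun _ => 0).
have [u hu] := choiceF hex.
pose U : 'M[k]_(r, size L) := \matrix_(i, j) u i j.
have : row_free U.
  apply: inj_row_free => v vU.
  pose c (i : nat) := \sum_(j < r | val j == i) v 0 j.
  have cE (j : 'I_r) : c j = v 0 j.
    rewrite /c (bigD1 j) //= big1 ?addr0 // => l /andP [/eqP lj /negbTE nl].
    by move: nl; rewrite (val_inj lj) eqxx.
  have : \sum_(i < r) c i *: y i = 0.
    transitivity (\sum_(j < size L) (v *m U) 0 j *: L`_j); last first.
      by rewrite vU big1 // => j _; rewrite mxE scale0r.
    transitivity (\sum_(i < r) \sum_(j < size L) (v 0 i * u i j) *: L`_j).
      apply: eq_bigr => i _; rewrite cE (hu i (ltn_ord i)) scaler_sumr.
      by apply: eq_bigr => j _; rewrite scalerA.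
    rewrite exchange_big /=; apply: eq_bigr => j _; rewrite mxE scaler_suml.
    by apply: eq_bigr => i _; rewrite mxE.
  move=> /hind h; apply/matrixP => i j; rewrite (ord1 i) mxE -cE; exact: h.
by rewrite /row_free => /eqP <-; exact: rank_leq_col.
Qed.

Lemma indep_ext (J : R -> Prop) r y x : is_rideal J -> indep r y ->
  (forall i, (i < r)%N -> J (y i)) -> ~ J x ->
  indep r.+1 (fun i => if (i < r)%N then y i else x).
Proof.
move=> [J0 JD Jr] hind hJ nJ c.
rewrite big_ord_recr /= ltnn.
have JZ a z : J z -> J (a *: z) by move=> h; rewrite -mulr_algr; apply: Jr.
have Jsum : J (\sum_(i < r) c i *: y i).
  by apply: (big_ind J) => // i _; apply: JZ; apply: hJ.
have e : \sum_(i < r) c (widen_ord (leqnSn r) i) *: (if (widen_ord (leqnSn r) i < r)%N then y (widen_ord (leqnSn r) i) else x)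
        = \sum_(i < r) c i *: y i.
  by apply: eq_bigr => i _ /=; rewrite ltn_ord.
rewrite e => hs.
have cr : c r = 0.
  apply/eqP; apply/negPn/negP => cr0; apply: nJ.
  have -> : x = (- (c r)^-1) *: \sum_(i < r) c i *: y i.
    have -> : \sum_(i < r) c i *: y i = - (c r *: x) by apply/eqP; rewrite -addr_eq0 hs.
    by rewrite scalerN scaleNr opprK scalerA mulVf // scale1r.
  exact: JZ.
move: hs; rewrite cr scale0r addr0 => /hind h i; rewrite ltnS leq_eqVlt.
by case/orP => [/eqP ->|/h].
Qed.

End Gens.


Section Mon.
Variables (k : fieldType) (R : algType k) (G : nat -> R -> Prop).

Definition Mon (s1 : seq R) (n : nat) : seq R :=
  iter n (fun M => [seq a * b | a <- M, b <- s1]) [:: 1].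

Lemma homog_span s1 : is_standard G ->
  (forall y, G 1 y -> exists c : 'I_(size s1) -> k, y = \sum_(i < size s1) c i *: s1`_i) ->
  forall n x, G n x -> kspan (Mon s1 n) x.
Proof.
move=> [_ H0 HS] Hs1; elim=> [|n IH] x.
  move=> /H0 [c ->]; exists (fun _ => c); by rewrite big_ord1.
move=> /HS [p [a [b [hab ->]]]]; apply: kspan_sum => l _.
have [ha hb] := hab l; exact: (kspan_mul (IH _ ha) (Hs1 _ hb)).
Qed.

Definition Ld (s1 : seq R) (d : nat) : seq R := flatten [seq Mon s1 i | i <- iota 0 d.+1].

Lemma homog_Ld s1 d : is_standard G ->
  (forall y, G 1 y -> exists c : 'I_(size s1) -> k, y = \sum_(i < size s1) c i *: s1`_i) ->
  forall n x, (n <= d)%N -> G n x -> kspan (Ld s1 d) x.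
Proof.
move=> hst hs1 n x nd /(homog_span hst hs1); apply: kspan_sub => z zM.
apply: kspan_mem; apply/flatten_mapP; exists n => //; rewrite mem_iota; lia.
Qed.
End Mon.

Section Main.
Variables (k : fieldType) (R : algType k) (G : nat -> R -> Prop) (d : nat) (L : seq R).
Hypothesis Hrf : is_rate_filtration G (Fdeg G d).
Hypothesis HL : forall n x, (n <= d)%N -> G n x -> kspan L x.

Definition PI (I : R -> Prop) := forall n (s : 'rV[R]_n), (forall y, I y <-> rspanM s y) -> ker_fg s.

Lemma PI_zero (I : R -> Prop) : eqI I (@zeroI k R) -> PI I.
Proof.
move=> hz n s hs; apply: kerfg_all => v.
have -> : s = 0.
  apply/matrixP => i j; rewrite (ord1 i) mxE; apply/hz/hs; exact: rspanM_entry.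
by rewrite mul0mx.
Qed.

Lemma rspanM_rowx n (t : 'rV[R]_n) x y :
  rspanM (row_mx t (x%:M : 'M[R]_1)) y <-> exists a b, rspanM t a /\ y = a + x * b.
Proof.
split.
  move=> [z ->]; rewrite -(vsubmxK z) mul_row_col mxE.
  exists ((t *m usubmx z) 0 0), (dsubmx z 0 0); split; first by exists (usubmx z).
  by rewrite mul_scalar_mx [X in _ + X = _]mxE.
move=> [a [b [[z ->] ->]]]; exists (col_mx z (b%:M : 'M[R]_1)).
by rewrite mul_row_col -scalar_mxM [RHS]mxE [X in _ = _ + X]mxE eqxx mulr1n.
Qed.

Lemma step I : Fdeg G d I -> ~ eqI I (@zeroI k R) ->
  exists J x g, [/\ Fdeg G d J, Fdeg G d (fun a => J (x * a)),
     (forall y, I y <-> exists a b, J a /\ y = a + x * b), (forall a, J a -> I a) &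
     [/\ I g, kspan L g & ~ J g]].
Proof.
move=> FI nz; have [_ _ _ H4] := Hrf.
have [J [x [[FJ nJI _ Ix] [IE _ FC]]]] := H4 I FI nz.
have JI : forall a, J a -> I a by move=> a Ja; apply/IE; exists a, 0; rewrite mulr0 addr0.
have [FJ1 _] := FJ; have [JR _ _] := FJ1.
exists J, x; suff [g hg] : exists g, [/\ I g, kspan L g & ~ J g] by exists g; split.
apply: NNPP => nex; apply: nJI => y; split; first exact: JI.
have [s [hs gs]] := gens_le FI.
move=> /gs; apply: rspan_ideal => // z /mapP [p ps ->].
apply: NNPP => nJ; apply: nex; exists p.2; split => //.
  by apply/gs; apply: rspan_mem; exact: map_f.
by have [h1 h2] := hs p ps; exact: (HL h2 h1).
Qed.

Lemma lift_PI I J x : Fdeg G d J -> Fdeg G d (fun a => J (x * a)) ->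
  (forall y, I y <-> exists a b, J a /\ y = a + x * b) -> PI J -> PI I.
Proof.
move=> [[_ _ [t ht]] _] [[_ _ [c hc]] _] IE PJ n s hs.
have kt : ker_fg (rowv t) by apply: PJ => y; rewrite ht; exact: rspan_rowv.
have kT := kerfg_ext kt (c := rowv c) (x := x)
  (fun a h => (rspan_rowv t (x * a)).1 ((ht _).1 ((hc a).2 ((rspan_rowv c a).2 h))))
  (fun a h => (rspan_rowv c a).1 ((hc a).1 ((ht _).2 ((rspan_rowv t (x * a)).2 h)))).
have TI y : rspanM (row_mx (rowv t) (x%:M : 'M[R]_1)) y <-> I y.
  rewrite rspanM_rowx IE; split=> [[a [b [ha ->]]]|[a [b [ha ->]]]]; exists a, b; split => //.
    by apply/ht/rspan_rowv.
  by apply/rspan_rowv/ht.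
apply: (kerfg_change _ _ kT) => j.
  by apply/TI/hs; exact: rspanM_entry.
by apply/hs/TI; exact: rspanM_entry.
Qed.

Lemma boundJ (I J : R -> Prop) g B : is_rideal J -> (forall a, J a -> I a) -> I g -> kspan L g -> ~ J g ->
  (forall r y, indep r y -> (forall i, (i < r)%N -> I (y i) /\ kspan L (y i)) -> (r <= B)%N) ->
  forall r y, indep r y -> (forall i, (i < r)%N -> J (y i) /\ kspan L (y i)) -> (r.+1 <= B)%N.
Proof.
move=> JR JI Ig kg nJg hB r y hi hy.
apply: (hB r.+1 (fun i => if (i < r)%N then y i else g)).
  by apply: (indep_ext (J := J)) => // i /hy [].
move=> i; rewrite ltnS leq_eqVlt => /orP [/eqP ->|hir]; rewrite ?ltnn ?hir //.
by have [h1 h2] := hy i hir; split => //; exact: JI.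
Qed.

Lemma main_ind B : forall I, Fdeg G d I ->
  (forall r y, indep r y -> (forall i, (i < r)%N -> I (y i) /\ kspan L (y i)) -> (r <= B)%N) ->
  PI I.
Proof.
elim: B => [|B IH] I FI hB; case: (classic (eqI I (@zeroI k R))) => [/PI_zero //|nz];
  have [J [x [g [FJ FC IE JI [Ig kg nJg]]]]] := step FI nz;
  have [[JR _ _] _] := FJ;
  have hBJ := boundJ JR JI Ig kg nJg hB.
  have h0 : indep 0 (fun _ => (0 : R)) by move=> c _ i; rewrite ltn0.
  have h0' : forall i, (i < 0)%N -> J 0 /\ kspan L 0 by move=> i; rewrite ltn0.
  by have := hBJ 0%N _ h0 h0'.
apply: (lift_PI FJ FC IE); apply: IH => // r y hi hy; have := hBJ r y hi hy; by [].
Qed.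
End Main.


Lemma nth_rem_mem (T : eqType) (s : seq T) x0 i q : (q < size s)%N -> q != i ->
  nth x0 s q \in take i s ++ drop i.+1 s.
Proof.
move=> hq; case: (ltngtP q i) => h // _; rewrite mem_cat.
  apply/orP; left; rewrite -(nth_take x0 h); apply: mem_nth; rewrite size_take; case: (ltnP i (size s)) => _; lia.
apply/orP; right; rewrite -(subnKC h) -nth_drop; apply: mem_nth; rewrite size_drop; lia.
Qed.

Lemma shift_sum (V : zmodType) b E (f : nat -> V) : (b <= E)%N ->
  \sum_(e < E) (if (b <= e)%N then f (e - b)%N else 0) = \sum_(e < E - b) f e.
Proof.
move=> bE; rewrite -(big_mkord xpredT (fun e => if (b <= e)%N then f (e - b)%N else 0)) -(big_mkord xpredT f).
rewrite (@big_cat_nat _ _ _ b) //= big_nat_cond big1; last first.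
  by move=> i /andP [/andP [_ ib] _]; rewrite leqNgt ib.
rewrite add0r -{1}(subnKC bE) (big_addn 0 (b + (E - b)) b) addKn.
by apply: eq_bigr => i _; rewrite leq_addl addnK.
Qed.

Section Graded2.
Variables (k : fieldType) (R : algType k) (G : nat -> R -> Prop).
Hypothesis Hgr : is_graded G.

Lemma rowI_hom n (a : 'rV[R]_n) (be : 'I_n -> nat) : (forall j, G (be j) (a 0 j)) ->
  is_homogeneous_ideal G (rspanM a).
Proof.
move=> ha _ [z ->]; set y := (a *m z) 0 0.
exists (Nx Hgr y), (fun e => hcomp Hgr e y); split; last exact: (@comp_full _ _ _ Hgr _ _ (leqnn _)).
move=> e; split; first exact: compG.
rewrite /y mx00E comp_sum; apply: rspanM_sum => j _.
rewrite (compM Hgr _ _ (ha j)); case: ifP => _; last exact: rspanM0.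
by apply: rspanMr; apply: rspanM_entry.
Qed.

Lemma rowI_mle n (a : 'rV[R]_n) (be : 'I_n -> nat) d : (forall j, G (be j) (a 0 j)) ->
  (forall j, (be j <= d)%N) -> m_le G (rspanM a) d.
Proof.
move=> ha hd m [s [[ms1 ms2 ms3] ->]]; apply/bigmax_leqP_seq => p ps _.
rewrite leqNgt; apply/negP => hp.
have hi : (index p s < size s)%N by rewrite index_mem.
apply: (ms3 _ hi); rewrite nth_index //.
set S' := map snd (take (index p s) s ++ drop (index p s).+1 s).
have Ip : rspanM a p.2 by apply/ms2; apply: rspan_mem; exact: map_f.
apply/rspan_rowv; apply: rspanM_sub Ip => j; apply/rspan_rowv.
have /ms2 [r hr] : rspanM a (a 0 j) by exact: rspanM_entry.
have e1 : hcomp Hgr (be j) (a 0 j) = a 0 j by rewrite (comp_hom Hgr _ (ha j)) eqxx.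
rewrite -e1 [X in hcomp _ _ X]hr comp_sum; apply: rspan_sum => q _.
have hq : (q < size s)%N by rewrite -(size_map snd s); exact: ltn_ord.
rewrite (nth_map (0%N, 0)) //.
have Gq : G (nth (0%N, 0) s q).1 (nth (0%N, 0) s q).2 by apply: ms1; exact: mem_nth.
rewrite (compM Hgr _ _ Gq); case: ifP => hle; last exact: rspan0.
apply: rspanr; apply: rspan_mem; rewrite /S'; apply: map_f; apply: nth_rem_mem => //.
apply/eqP => qi; move: hle; rewrite qi nth_index // => hle.
by move: (leq_trans hle (hd j)); rewrite leqNgt hp.
Qed.

End Graded2.


Section Graded3.
Variables (k : fieldType) (R : algType k) (G : nat -> R -> Prop).
Hypothesis Hgr : is_graded G.

Definition hv n (b : 'I_n -> nat) (e : nat) (v : 'cV[R]_n) : 'cV[R]_n :=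
  \col_j (if (b j <= e)%N then hcomp Hgr (e - b j) (v j 0) else 0).

Lemma hv_ker m n (A : 'M[R]_(m, n)) b c e v : homogeneous_mx G A b c ->
  A *m v = 0 -> A *m hv b e v = 0.
Proof.
move=> hA Av; apply/matrixP => i j; rewrite (ord1 j) [RHS]mxE mxE.
case: (leqP (c i) e) => ci.
  transitivity (hcomp Hgr (e - c i) ((A *m v) i 0)); last by rewrite Av mxE comp0.
  rewrite [in RHS]mxE comp_sum; apply: eq_bigr => l _; rewrite mxE.
  case: (hA i l) => [->|[cb Ga]]; first by rewrite !mul0r comp0.
  rewrite (compM Hgr _ _ Ga); case: (leqP (b l) e) => hle.
    have h1 : (b l - c i <= e - c i)%N by lia.
    rewrite h1; congr (_ * hcomp _ _ _); lia.
  rewrite ifF ?mulr0 //; apply/negbTE; rewrite -ltnNge; lia.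
apply: big1 => l _; rewrite mxE.
case: (hA i l) => [->|[cb _]]; first by rewrite mul0r.
by rewrite ifF ?mulr0 //; apply/negbTE; rewrite -ltnNge; lia.
Qed.

Lemma hv_full n b (v : 'cV[R]_n) E : (forall j, (b j + Nx Hgr (v j (0%R : 'I_1)) <= E)%N) ->
  v = \sum_(e < E) hv b e v.
Proof.
move=> hE; apply/matrixP => j i; rewrite (ord1 i) summxE.
rewrite (eq_bigr (fun e : 'I_E => if (b j <= e)%N then hcomp Hgr (e - b j) (v j 0) else 0));
  last by move=> e _; rewrite mxE.
rewrite (@shift_sum _ (b j) E (fun x => hcomp Hgr x (v j 0))); last by have := hE j; lia.
apply: comp_full; have := hE j; lia.
Qed.

Lemma hom_gens m n (A : 'M[R]_(m, n)) b c : homogeneous_mx G A b c -> ker_fg A ->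
  exists p (W : 'I_p -> 'cV[R]_n) (e : 'I_p -> nat),
    [/\ forall l, A *m W l = 0, forall v, A *m v = 0 -> inspan W v &
        forall l j, W l j 0 = 0 \/ (b j <= e l)%N /\ G (e l - b j)%N (W l j 0)].
Proof.
move=> hA [p0 [w [w0 wsp]]].
pose E := (\max_(l : 'I_p0) \max_(j : 'I_n) (b j + Nx Hgr (w l j (0%R : 'I_1))))%N.
have hE l j : (b j + Nx Hgr (w l j (0%R : 'I_1)) <= E)%N.
  have h1 := @leq_bigmax _ (fun j : 'I_n => (b j + Nx Hgr (w l j (0%R : 'I_1)))%N) j.
  have h2 := @leq_bigmax _ (fun l : 'I_p0 => \max_(j : 'I_n) (b j + Nx Hgr (w l j (0%R : 'I_1))))%N l.
  exact: leq_trans h1 h2.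
pose W' (t : ('I_p0 * 'I_E)%type) := hv b t.2 (w t.1).
exists #|{: 'I_p0 * 'I_E}|, (fun i => W' (enum_val i)), (fun i => val (enum_val i).2); split.
- by move=> i; apply: hv_ker hA (w0 _).
- move=> v /wsp [r ->]; apply: inspan_sum => l _; apply: inspanMs.
  rewrite (@hv_full _ b (w l) E) //; apply: inspan_sum => e _.
  by have := inspan_gen (fun i => W' (enum_val i)) (enum_rank (l, e)); rewrite enum_rankK.
move=> i j; rewrite mxE; case: ifP => h; last by left.
by right; split => //; exact: compG.
Qed.
End Graded3.

Lemma single_row (k : fieldType) (R : algType k) (G : nat -> R -> Prop) :
  is_fg_standard G ->
  (exists d0 : nat, forall d : nat, (d0 <= d)%N -> is_rate_filtration G (Fdeg G d)) ->
  forall n (a : 'rV[R]_n) (be : 'I_n -> nat), (forall j, G (be j) (a 0 j)) -> ker_fg a.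
Proof.
move=> [Hst [s1 [_ hs1]]] [d0 Hd0] n a be ha.
have [Hgr _ _] := Hst.
pose d := maxn d0 (\max_(j : 'I_n) be j)%N.
have Hrf := Hd0 d (leq_maxl _ _).
have hd j : (be j <= d)%N := leq_trans (@leq_bigmax _ be j) (leq_maxr _ _).
pose L := Ld s1 d.
have HL : forall n x, (n <= d)%N -> G n x -> kspan L x := homog_Ld Hst hs1.
have FI : Fdeg G d (rspanM a).
  split; last exact: (rowI_mle Hgr ha hd).
  split; [split; [exact: rspanM0|exact: rspanMD|exact: rspanMr] | exact: (rowI_hom Hgr ha) |].
  exists [seq a 0 j | j <- enum 'I_n] => y; split.
    move=> h; apply/rspan_rowv; apply: rspanM_sub h => j; apply/rspan_rowv; apply: rspan_mem.
    by apply: map_f; exact: mem_enum.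
  move/rspan_rowv; apply: rspanM_sub => j; rewrite mxE.
  have : [seq a 0 j | j <- enum 'I_n]`_j \in [seq a 0 j | j <- enum 'I_n] by apply: mem_nth.
  by move=> /mapP [j' _ ->]; exact: rspanM_entry.
have := main_ind Hrf HL (B := size L) FI (fun r y hi hy => rank_bound hi (fun i h => (hy i h).2)).
by apply.
Qed.

Lemma rows (k : fieldType) (R : algType k) (G : nat -> R -> Prop) :
  is_fg_standard G ->
  (exists d0 : nat, forall d : nat, (d0 <= d)%N -> is_rate_filtration G (Fdeg G d)) ->
  forall m n (A : 'M[R]_(m, n)) b c, homogeneous_mx G A b c -> ker_fg A.
Proof.
move=> Hstd Hd; have [[Hgr _ _] _] := Hstd.
elim=> [|m IH] n A b c hA.
  by apply: kerfg_all => v; rewrite flatmx0.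
pose a : 'rV[R]_n := usubmx (A : 'M_(1 + m, n)).
pose A' : 'M[R]_(m, n) := dsubmx (A : 'M_(1 + m, n)).
pose i0 : 'I_m.+1 := lshift m (0 : 'I_1).
have ha j : G (b j - c i0)%N (a 0 j).
  by rewrite mxE; case: (hA i0 j) => [->|[_ h]] //; exact: (G0 Hgr).
have ka := single_row Hstd Hd ha.
have hA1 : homogeneous_mx G a b (fun i => c (lshift m i)) by move=> i j; rewrite mxE; exact: hA.
have [p [W [e [W0 Wsp Wh]]]] := hom_gens Hgr hA1 ka.
pose Wm : 'M[R]_(n, p) := \matrix_(j, l) W l j 0.
have hA'W : homogeneous_mx G (A' *m Wm) e (fun i => c (rshift 1 i)).
  move=> i l; rewrite mxE; set ci := c (rshift 1 i).
  case: (leqP ci (e l)) => hle.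
    right; split => //; apply: (Gsum Hgr) => j _; rewrite !mxE.
    case: (hA (rshift 1 i) j) => [->|[cb GA]]; first by rewrite mul0r; exact: (G0 Hgr).
    case: (Wh l j) => [->|[be Gw]]; first by rewrite mulr0; exact: (G0 Hgr).
    have -> : (e l - ci)%N = ((b j - ci) + (e l - b j))%N by rewrite /ci; lia.
    by rewrite /ci; exact: (GM Hgr GA Gw).
  left; apply: big1 => j _; rewrite !mxE.
  case: (hA (rshift 1 i) j) => [->|[cb GA]]; first by rewrite mul0r.
  case: (Wh l j) => [->|[be Gw]]; first by rewrite mulr0.
  by exfalso; move: hle cb be; rewrite /ci; lia.
have [q [z [z0 zsp]]] := IH _ _ _ _ hA'W.
have aW : a *m Wm = 0.
  apply/matrixP => i l; rewrite (ord1 i).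
  transitivity ((a *m W l) 0 0); last by rewrite W0 !mxE.
  by rewrite !mxE; apply: eq_bigr => j _; rewrite !mxE.
have AE : (A : 'M_(1 + m, n)) = col_mx a A' by rewrite vsubmxK.
apply: (@kerfgI _ _ (1 + m) n A q (fun l => Wm *m z l)).
  by move=> l; rewrite mulmxA AE !mul_col_mx aW mul0mx z0 col_mx0.
move=> v Av.
have : col_mx (a *m v) (A' *m v) = 0 by rewrite -mul_col_mx -AE.
move/eqP; rewrite col_mx_eq0 => /andP [/eqP av /eqP A'v].
have [r vE] := Wsp v av.
pose rc : 'cV[R]_p := \col_l r l.
have vW : v = Wm *m rc.
  rewrite vE; apply/matrixP => j i; rewrite (ord1 i) summxE !mxE; apply: eq_bigr => l _.
  by rewrite mxsE !mxE.
have hrc : (A' *m Wm) *m rc = 0 by rewrite -mulmxA -vW.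
have [rho rcE] := zsp _ hrc.
exists rho; rewrite vW rcE mulmx_sumr; apply: eq_bigr => l _; exact: mulmxA.
Qed.

Local Close Scope ring_scope.

Theorem mainTheorem14 (k : fieldType) (R : algType k) (G : nat -> R -> Prop) :
  is_fg_standard G ->
  (exists d0 : nat, forall d : nat, (d0 <= d)%N ->
      is_rate_filtration G (Fdeg G d)) ->
  projective_coherent G.
Proof.
move=> Hstd Hd m n A b c hA; exact: (rows Hstd Hd hA).
Qed.
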